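(* Let $(0,0,y_e,0)$ be an equilibrium of the Steiner drop system, with $y_e=\tfrac13\sqrt{\tan\alpha_e}$, $\alpha_e\in(0,\pi/2)$, $q(\alpha_e)=q(\alpha_0)$. Then $f_x(0,y_e)<0$, so two eigenvalues of the Jacobian there are $\pm i\sqrt{-f_x(0,y_e)}$, nonzero and purely imaginary. Furthermore $h_y(0,y_e)<0$ if $\alpha_e<\alpha_0^*$, $h_y(0,y_e)=0$ if $\alpha_e=\alpha_0^*$, and $h_y(0,y_e)>0$ if $\alpha_e>\alpha_0^*$. Consequently, at the equilibrium $(0,0,\tfrac13\sqrt{\tan\alpha_0},0)$ all four eigenvalues are nonzero and purely imaginary when $\alpha_0<\alpha_0^*$, while when $\alpha_0>\alpha_0^*$ two eigenvalues are purely imaginary and two are real, nonzero, of opposite signs; for $\alpha_0\neq\alpha_0^*$ the two equilibria always have opposite types (the one with smaller angle $\alpha_e$ has all eigenvalues purely imaginary).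
   Context: Let $q(\alpha)=\dfrac{2\sin^2\alpha\,\sqrt{\tan\alpha}}{4+\sec\alpha}$ for $\alpha\in(0,\pi/2)$, and let $\alpha_0^*\approx1.391$ denote the unique point in $(0,\pi/2)$ at which $q$ attains its maximum ($q$ is strictly increasing before and strictly decreasing after $\alpha_0^*$). Fix $\alpha_0\in(0,\pi/2)$. For $x\in\mathbb{R}$, $y>0$ define $a(x,y)=\sqrt{\left(\tfrac{1}{3y}-3x\right)^2+9y^2}$, $b(x,y)=\sqrt{\left(\tfrac{1}{3y}+3x\right)^2+9y^2}$, $f(x,y)=\frac{1}{a}\left(\frac{1}{3y}-3x\right)-\frac{1}{b}\left(\frac{1}{3y}+3x\right)$, $h(x,y)=-3y\left(\frac1a+\frac1b\right)+\frac{q(\alpha_0)}{3y}\left(\frac{2(a+b)}{3y}+ab\right)$. The Steiner drop system is the ODE on $\{(x,w,y,z)\in\mathbb{R}^4: y>0\}$: $\dot x=w,\ \dot w=f(x,y),\ \dot y=z,\ \dot z=h(x,y)$. Its equilibria are the points $(0,0,y,0)$ with $y=\tfrac13\sqrt{\tan\alpha}$, $q(\alpha)=q(\alpha_0)$; at such a point the Jacobian eigenvalues are $\pm\sqrt{f_x(0,y)},\pm\sqrt{h_y(0,y)}$. Subscripts denote partial derivatives. *)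

(* Defs.v *)
From Stdlib Require Import Reals Lra.
Open Scope R_scope.

Definition q (al : R) : R :=
  2 * (sin al) ^ 2 * sqrt (tan al) / (4 + / cos al).

Definition aa (x y : R) : R := sqrt ((/ (3 * y) - 3 * x) ^ 2 + 9 * y ^ 2).
Definition bb (x y : R) : R := sqrt ((/ (3 * y) + 3 * x) ^ 2 + 9 * y ^ 2).

Definition ff (x y : R) : R :=
  / aa x y * (/ (3 * y) - 3 * x) - / bb x y * (/ (3 * y) + 3 * x).

Definition hh (al0 x y : R) : R :=
  - 3 * y * (/ aa x y + / bb x y)
  + q al0 / (3 * y) * (2 * (aa x y + bb x y) / (3 * y) + aa x y * bb x y).

Definition yeq (al : R) : R := / 3 * sqrt (tan al).

Definition is_fx (x y l : R) : Prop := derivable_pt_lim (fun t => ff t y) x l.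
Definition is_hy (al0 x y l : R) : Prop := derivable_pt_lim (fun t => hh al0 x t) y l.

(* complex numbers as pairs (re, im); csq = squaring *)
Definition csq (z : R * R) : R * R :=
  (fst z * fst z - snd z * snd z, 2 * fst z * snd z).

(* Jacobian eigenvalues at an equilibrium (0,0,y,0): by the context they are
   +-sqrt(f_x(0,y)), +-sqrt(h_y(0,y)), i.e. the complex lam with
   lam^2 = f_x(0,y) or lam^2 = h_y(0,y). *)
Definition jac_eig (al0 y : R) (lam : R * R) : Prop :=
  exists fx hy, is_fx 0 y fx /\ is_hy al0 0 y hy /\
    (csq lam = (fx, 0) \/ csq lam = (hy, 0)).

Definition eig_x (y : R) (lam : R * R) : Prop :=
  exists fx, is_fx 0 y fx /\ csq lam = (fx, 0).
Definition eig_y (al0 y : R) (lam : R * R) : Prop :=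
  exists hy, is_hy al0 0 y hy /\ csq lam = (hy, 0).

Definition pure_imag_nz (z : R * R) : Prop := fst z = 0 /\ snd z <> 0.
Definition real_nz (z : R * R) : Prop := snd z = 0 /\ fst z <> 0.

Definition all_pure_imag (al0 y : R) : Prop :=
  forall lam, jac_eig al0 y lam -> pure_imag_nz lam.

Definition saddle_center (al0 y : R) : Prop :=
  (forall lam, eig_x y lam -> pure_imag_nz lam) /\
  (forall lam, eig_y al0 y lam -> real_nz lam) /\
  (exists l1 l2, eig_y al0 y l1 /\ eig_y al0 y l2 /\
     snd l1 = 0 /\ snd l2 = 0 /\ 0 < fst l1 /\ fst l2 < 0).

(* Main.v *)
From Stdlib Require Import Reals Lra.
From Coquelicot Require Import Coquelicot.
Require Import Defs.
Open Scope R_scope.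

Definition Rr y := sqrt ((/ (3 * y))^2 + 9 * y^2).
Definition NN c := 16*c^3 + 6*c^2 + 4*c - 1.
Definition GG y := 2 / ((/(3*y))^2 * (Rr y)^2 * (4*/(3*y) + Rr y)).

Lemma Rr_pos y : 0 < y -> 0 < Rr y.
Proof. intros; unfold Rr; apply sqrt_lt_R0. assert (0 < 9*y^2) by (apply Rmult_lt_0_compat; [lra| apply pow_lt; lra]). nra. Qed.

Lemma Rr_sq y : 0 < y -> Rr y * Rr y = (/ (3 * y))^2 + 9 * y^2.
Proof. intros; unfold Rr; apply sqrt_sqrt. assert (0 < 9*y^2) by (apply Rmult_lt_0_compat; [lra| apply pow_lt; lra]). nra. Qed.

Ltac fold_Rr y :=
  repeat match goal with |- context [sqrt ?A] =>
    replace (sqrt A) with (Rr y) by (unfold Rr; f_equal; field; lra) end.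
Lemma frac_eq A B C D : B<>0 -> D<>0 -> A*D = C*B -> A/B = C/D.
Proof. intros. field_simplify_eq; auto. lra. Qed.
Ltac red_r r E :=
  let H2 := fresh in let H3 := fresh in let H4 := fresh in let H5 := fresh in
  let H6 := fresh in let H7 := fresh in let H8 := fresh in
  assert (H2 : r^2 = E) by (simpl; lra);
  assert (H3 : r^3 = E*r) by (rewrite <- H2; ring);
  assert (H4 : r^4 = E^2) by (rewrite <- H2; ring);
  assert (H5 : r^5 = E^2*r) by (rewrite <- H2; ring);
  assert (H6 : r^6 = E^3) by (rewrite <- H2; ring);
  assert (H7 : r^7 = E^3*r) by (rewrite <- H2; ring);
  assert (H8 : r^8 = E^4) by (rewrite <- H2; ring);
  ring_simplify; try rewrite ?H8, ?H7, ?H6, ?H5, ?H4, ?H3, ?H2; clear H2 H3 H4 H5 H6 H7 H8.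


Ltac pos_tac := apply Rgt_not_eq; repeat (apply Rmult_lt_0_compat || apply pow_lt || apply Rinv_0_lt_compat); try lra; nra.

Lemma eq_facts a : 0 < a < PI/2 ->
  0 < yeq a /\ cos a = /(3*yeq a) / Rr (yeq a) /\ q a = GG (yeq a).
Proof.
intros Ha. assert (Hc : 0 < cos a) by (apply cos_gt_0; lra).
assert (Hs : 0 < sin a) by (apply sin_gt_0; lra).
assert (Ht : 0 < tan a) by (unfold tan; apply Rdiv_lt_0_compat; lra).
assert (Hsc : sin a * sin a = 1 - cos a * cos a) by (pose proof (sin2_cos2 a); unfold Rsqr in *; lra).
assert (Hp : 0 < sqrt (tan a)) by (apply sqrt_lt_R0; lra).
assert (Hpp : sqrt (tan a) * sqrt (tan a) = sin a * / cos a) by (rewrite sqrt_sqrt; [reflexivity|lra]).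
unfold yeq, q, GG, Rr.
set (p := sqrt (tan a)) in *. set (s := sin a) in *. set (c := cos a) in *.
assert (HR : sqrt ((/ (3 * (/3 * p)))^2 + 9 * (/3*p)^2) = /(c*p)).
{ rewrite <- (sqrt_pow2 (/(c*p))).
  2: { left. apply Rinv_0_lt_compat. nra. }
  f_equal. field_simplify; try lra.
  apply frac_eq; [pos_tac | pos_tac |].
  red_r p (s*/c). red_r s (1 - c^2). field. lra. }
rewrite HR. split; [lra|]. split.
- field. lra.
- field_simplify; try (repeat split; apply Rgt_not_eq; nra).
  apply frac_eq; [pos_tac | pos_tac |].
  red_r p (s*/c). red_r s (1 - c^2). field. lra.
Qed.


Lemma fx_der y : 0 < y -> is_fx 0 y (-6 * (9*y^2) / (Rr y)^3).
Proof.
intros Hy. unfold is_fx. apply is_derive_Reals.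
unfold ff, aa, bb. auto_derive.
- assert (0 < 9*y^2) by (apply Rmult_lt_0_compat; [lra| apply pow_lt; lra]).
  assert (0 <= (/(3*y)) * (/(3*y))) by nra.
  repeat split; try nra; apply Rgt_not_eq, sqrt_lt_R0; nra.
- fold_Rr y. pose proof (Rr_pos y Hy). pose proof (Rr_sq y Hy).
  set (r := Rr y) in *. field_simplify; try lra.
  apply frac_eq; [pos_tac | pos_tac |].
  red_r r ((/(3*y))^2 + 9*y^2). field. lra.
Qed.

Lemma hy_der al0 y : 0 < y -> q al0 = GG y ->
  is_hy al0 0 y (-6 * NN (/(3*y) / Rr y) / (4 * /(3*y) + Rr y)).
Proof.
intros Hy Hq. unfold is_hy. apply is_derive_Reals.
unfold hh, aa, bb. rewrite Hq. unfold GG. auto_derive.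
- fold_Rr y; pose proof (Rr_pos y Hy).
  assert (0 < 9*y^2) by (apply Rmult_lt_0_compat; [lra| apply pow_lt; lra]).
  assert (0 <= (/(3*y)) * (/(3*y))) by nra.
  repeat split; try lra; nra.
- fold_Rr y. pose proof (Rr_pos y Hy). pose proof (Rr_sq y Hy).
  set (r := Rr y) in *. unfold NN. assert (0 < r*y) by nra.
  field_simplify; try (repeat split; nra).
  assert (0 < r^3*y^2) by (apply Rmult_lt_0_compat; apply pow_lt; lra).
  apply frac_eq; [apply Rgt_not_eq; nra | apply Rgt_not_eq; nra |].
  red_r r ((/(3*y))^2 + 9*y^2). field. lra.
Qed.

Lemma q_der a : 0 < a < PI/2 -> derivable_pt_lim q a (sin a * sqrt (tan a) * NN (cos a) / (4 * cos a + 1)^2).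
Proof.
intros Ha. assert (Hc : 0 < cos a) by (apply cos_gt_0; lra).
assert (Hs : 0 < sin a) by (apply sin_gt_0; lra).
assert (Ht : 0 < tan a) by (unfold tan; apply Rdiv_lt_0_compat; lra).
apply is_derive_Reals. unfold q. unfold tan in *. auto_derive.
- repeat split; try lra. apply Rgt_not_eq. assert (0 < / cos a) by (apply Rinv_0_lt_compat; lra). lra.
- set (s := sin a) in *. set (c := cos a) in *.
  assert (Hp : 0 < sqrt (s/c)) by (apply sqrt_lt_R0; lra).
  assert (Hpp : sqrt (s/c) * sqrt (s/c) = s/c) by (apply sqrt_sqrt; lra).
  set (p := sqrt (s/c)) in *.
  unfold NN. change (sqrt (s * / c)) with p.
  assert (Hsc : s*s = 1 - c*c) by (unfold s, c; pose proof (sin2_cos2 a); unfold Rsqr in *; lra).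
  assert (0 < 4*c+1) by lra.
  field_simplify; try (repeat split; apply Rgt_not_eq; nra).
  assert (0 < c*p) by nra.
  apply frac_eq; [apply Rgt_not_eq; nra | apply Rgt_not_eq; nra |].
  red_r p (s*/c). red_r s (1 - c^2). field. lra.
Qed.

Lemma csq_neg lam c : csq lam = (c, 0) -> c < 0 -> pure_imag_nz lam.
Proof.
destruct lam as [a b]; unfold csq, pure_imag_nz; simpl; intros H Hc.
injection H; intros H1 H2.
assert (a = 0 \/ b = 0) as [Ha|Hb].
{ destruct (Req_dec a 0); [left; auto| right]. apply (Rmult_eq_reg_l (2*a)); [lra| ]. lra. }
- subst a. split; auto. intro; subst b. lra.
- subst b. nra.
Qed.

Lemma csq_pos lam c : csq lam = (c, 0) -> 0 < c -> real_nz lam.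
Proof.
destruct lam as [a b]; unfold csq, real_nz; simpl; intros H Hc.
injection H; intros H1 H2.
assert (a = 0 \/ b = 0) as [Ha|Hb].
{ destruct (Req_dec a 0); [left; auto| right]. apply (Rmult_eq_reg_l (2*a)); [lra| ]. lra. }
- subst a. nra.
- subst b. split; auto. intro; subst a. lra.
Qed.

Lemma NN_mono c1 c2 : 0 < c1 -> c1 < c2 -> NN c1 < NN c2.
Proof. intros. unfold NN.
assert (0 < (c2-c1)*(c2^2+c2*c1+c1^2)) by (apply Rmult_lt_0_compat; nra).
assert (0 < (c2-c1)*(c2+c1)) by (apply Rmult_lt_0_compat; nra).
assert (c2^3 - c1^3 = (c2-c1)*(c2^2+c2*c1+c1^2)) by ring.
assert (c2^2 - c1^2 = (c2-c1)*(c2+c1)) by ring.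
lra. Qed.

Lemma part1 al0 alst :
    0 < alst < PI / 2 -> NN (cos alst) = 0 ->
    forall ale : R,
       0 < ale < PI / 2 -> q ale = q al0 ->
       (exists fx, is_fx 0 (yeq ale) fx /\ fx < 0 /\
          (forall lam, csq lam = (fx, 0) -> pure_imag_nz lam)) /\
       (exists hy, is_hy al0 0 (yeq ale) hy /\
          (ale < alst -> hy < 0) /\ (ale = alst -> hy = 0) /\
          (alst < ale -> 0 < hy)).
Proof.
intros Hst HN ale Ha Hq.
destruct (eq_facts ale Ha) as [Hy [Hc HG]].
set (y := yeq ale) in *.
pose proof (Rr_pos y Hy) as Hr.
split.
- exists (-6 * (9*y^2) / (Rr y)^3). split; [apply fx_der; auto|].
  assert (Hneg : -6 * (9*y^2) / (Rr y)^3 < 0).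
  { unfold Rdiv. assert (0 < 9*y^2) by (apply Rmult_lt_0_compat; [lra| apply pow_lt; lra]).
    assert (0 < / Rr y ^3) by (apply Rinv_0_lt_compat, pow_lt; lra). nra. }
  split; auto. intros lam Hl. eapply csq_neg; eauto.
- exists (-6 * NN (/(3*y) / Rr y) / (4 * /(3*y) + Rr y)).
  split; [apply hy_der; auto; congruence|].
  rewrite <- Hc.
  assert (Hd : 0 < / (4 * /(3*y) + Rr y)).
  { apply Rinv_0_lt_compat. assert (0 < /(3*y)) by (apply Rinv_0_lt_compat; lra). lra. }
  assert (Hcs : 0 < cos alst) by (apply cos_gt_0; lra).
  assert (Hca : 0 < cos ale) by (apply cos_gt_0; lra).
  unfold Rdiv. split; [|split].
  + intros Hlt. assert (cos alst < cos ale) by (apply cos_decreasing_1; lra).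
    pose proof (NN_mono _ _ Hcs H). nra.
  + intros ->. rewrite HN. ring.
  + intros Hlt. assert (cos ale < cos alst) by (apply cos_decreasing_1; lra).
    pose proof (NN_mono _ _ Hca H). nra.
Qed.

Lemma types al0 alst :
    0 < alst < PI / 2 -> NN (cos alst) = 0 ->
    forall a, 0 < a < PI / 2 -> q a = q al0 ->
    (a < alst -> all_pure_imag al0 (yeq a)) /\
    (alst < a -> saddle_center al0 (yeq a)).
Proof.
intros Hst HN a Ha Hq.
destruct (part1 al0 alst Hst HN a Ha Hq) as [[fx [Hfx [Hfn Hfl]]] [hy [Hhy [H1 [H2 H3]]]]].
split.
- intros Hlt lam [fx' [hy' [Hf' [Hh' [E|E]]]]].
  + rewrite (uniqueness_limite _ _ _ _ Hf' Hfx) in E. eapply csq_neg; eauto.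
  + rewrite (uniqueness_limite _ _ _ _ Hh' Hhy) in E. eapply csq_neg; eauto.
- intros Hlt. specialize (H3 Hlt).
  split; [|split].
  + intros lam [fx' [Hf' E]]. rewrite (uniqueness_limite _ _ _ _ Hf' Hfx) in E. eapply csq_neg; eauto.
  + intros lam [hy' [Hh' E]]. rewrite (uniqueness_limite _ _ _ _ Hh' Hhy) in E. eapply csq_pos; eauto.
  + assert (Hsq : sqrt hy * sqrt hy = hy) by (apply sqrt_sqrt; lra).
    assert (0 < sqrt hy) by (apply sqrt_lt_R0; lra).
    exists (sqrt hy, 0), (- sqrt hy, 0). simpl.
    repeat split; try lra.
    * exists hy. split; auto. unfold csq; simpl. f_equal; lra.
    * exists hy. split; auto. unfold csq; simpl. f_equal; lra.
Qed.

Theorem mainTheorem4 :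
  forall al0 alst : R,
    0 < al0 < PI / 2 ->
    0 < alst < PI / 2 ->
    (* alst = alpha_0^*: q strictly increasing before and strictly decreasing after *)
    (forall a b, 0 < a -> a < b -> b <= alst -> q a < q b) ->
    (forall a b, alst <= a -> a < b -> b < PI / 2 -> q b < q a) ->
    (* statements at an arbitrary equilibrium (0,0,y_e,0) *)
    (forall ale : R,
       0 < ale < PI / 2 -> q ale = q al0 ->
       (exists fx, is_fx 0 (yeq ale) fx /\ fx < 0 /\
          (forall lam, csq lam = (fx, 0) -> pure_imag_nz lam)) /\
       (exists hy, is_hy al0 0 (yeq ale) hy /\
          (ale < alst -> hy < 0) /\ (ale = alst -> hy = 0) /\
          (alst < ale -> 0 < hy))) /\
    (* consequences at the equilibrium (0,0,sqrt(tan al0)/3,0) *)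
    (al0 < alst -> all_pure_imag al0 (yeq al0)) /\
    (alst < al0 -> saddle_center al0 (yeq al0)) /\
    (* the two equilibria have opposite types when al0 <> alst *)
    (al0 <> alst ->
       forall a1 a2 : R,
         0 < a1 -> a1 < a2 -> a2 < PI / 2 ->
         q a1 = q al0 -> q a2 = q al0 ->
         all_pure_imag al0 (yeq a1) /\ saddle_center al0 (yeq a2)).
Proof.
intros al0 alst H0 Hst Hinc Hdec.
assert (HN : NN (cos alst) = 0).
{ pose proof (q_der alst Hst) as D.
  pose (pr := exist (fun l => derivable_pt_abs q alst l) _ D : derivable_pt q alst).
  assert (Hm := deriv_maximum q 0 (PI/2) alst pr ltac:(lra) ltac:(lra)).
  assert (E : derive_pt q alst pr = 0).
  { apply Hm. intros x Hx1 Hx2.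
    destruct (Rtotal_order x alst) as [Hl|[He|Hg]].
    - left. apply Hinc; lra.
    - subst; lra.
    - left. apply Hdec; lra. }
  change (sin alst * sqrt (tan alst) * NN (cos alst) / (4 * cos alst + 1)^2 = 0) in E.
  assert (Hc : 0 < cos alst) by (apply cos_gt_0; lra).
  assert (Hs : 0 < sin alst) by (apply sin_gt_0; lra).
  assert (Ht : 0 < tan alst) by (unfold tan; apply Rdiv_lt_0_compat; lra).
  assert (Hp : 0 < sqrt (tan alst)) by (apply sqrt_lt_R0; lra).
  assert (Hk : 0 < / (4 * cos alst + 1)^2) by (apply Rinv_0_lt_compat, pow_lt; lra).
  unfold Rdiv in E.
  assert (0 < sin alst * sqrt (tan alst)) by nra.
  destruct (Rmult_integral _ _ E) as [E1|E1]; [|lra].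
  destruct (Rmult_integral _ _ E1) as [E2|E2]; [lra|exact E2]. }
split; [exact (part1 al0 alst Hst HN)|].
split; [intros; apply (types al0 alst Hst HN al0 H0 eq_refl); auto|].
split; [intros; apply (types al0 alst Hst HN al0 H0 eq_refl); auto|].
intros _ a1 a2 Ha1 H12 Ha2 Hq1 Hq2.
assert (a1 < alst).
{ destruct (Rtotal_order a1 alst) as [Hl|[He|Hg]]; auto.
  - subst a1. exfalso. assert (q a2 < q alst) by (apply Hdec; lra). lra.
  - exfalso. assert (q a2 < q a1) by (apply Hdec; lra). lra. }
assert (alst < a2).
{ destruct (Rtotal_order a2 alst) as [Hl|[He|Hg]]; auto.
  - exfalso. assert (q a1 < q a2) by (apply Hinc; lra). lra.
  - subst a2. exfalso. assert (q a1 < q alst) by (apply Hinc; lra). lra. }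
split.
- apply (types al0 alst Hst HN a1); auto; lra.
- apply (types al0 alst Hst HN a2); auto; lra.
Qed.
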